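(* Every fully $\mathrm{A}^{+1}$-representable finite distributive lattice has at most one join-reducible coatom.
   Context: For a finite lattice $D$, $J(D)$ is the set of nonzero join-irreducible elements and $J^+(D)=J(D)\cup\{0,1\}$. For an algebra $A$, $\mathrm{Con}(A)$ is its congruence lattice and $\mathrm{Princ}(A)$ its set of principal congruences. $D$ is fully $\mathrm{A}^{+1}$-representable if for every $Q$ with $J^+(D)\subseteq Q\subseteq D$ there exist an algebra $A$ and a lattice isomorphism $\phi\colon\mathrm{Con}(A)\to D$ with $\phi(\mathrm{Princ}(A))=Q$. A coatom is an element covered by $1$; it is join-reducible if it is not join-irreducible. *)

(* Defs.v *)
From HB Require Import structures.
From mathcomp Require Import all_boot all_order.
Set Implicit Arguments. Unset Strict Implicit. Unset Printing Implicit Defensive.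
Import Order.TTheory.
Local Open Scope order_scope.

Record algebra := Algebra {
  carrier : Type;
  opidx : Type;
  arity : opidx -> nat;
  op : forall i : opidx, ('I_(arity i) -> carrier) -> carrier }.

Definition subrel (T : Type) (R S : T -> T -> Prop) := forall x y, R x y -> S x y.

Definition congruence (A : algebra) (R : carrier A -> carrier A -> Prop) :=
  [/\ (forall x, R x x), (forall x y, R x y -> R y x),
      (forall x y z, R x y -> R y z -> R x z) &
      (forall (i : opidx A) (f g : 'I_(arity i) -> carrier A),
          (forall k, R (f k) (g k)) -> R (op f) (op g))].

Definition princ (A : algebra) (a b : carrier A) : carrier A -> carrier A -> Prop :=
  fun x y => forall S, congruence S -> S a b -> S x y.

(* phi : Con(A) -> D is a lattice isomorphism (= order isomorphism between
   lattices); Con(A) ordered by inclusion, elements compared extensionally. *)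
Definition con_iso (A : algebra) d (D : porderType d)
    (phi : (carrier A -> carrier A -> Prop) -> D) :=
  (forall R S, congruence R -> congruence S -> (subrel R S <-> phi R <= phi S)) /\
  (forall x : D, exists R, congruence R /\ phi R = x).

Definition join_irr d (D : finTBDistrLatticeType d) (x : D) :=
  x != \bot /\ forall y z : D, x = y `|` z -> x = y \/ x = z.

Definition in_Jplus d (D : finTBDistrLatticeType d) (x : D) :=
  [\/ x = \bot, x = \top | join_irr x].

Definition coatom d (D : finTBDistrLatticeType d) (x : D) :=
  x < \top /\ ~ exists y : D, x < y /\ y < \top.

Definition fully_A1_representable d (D : finTBDistrLatticeType d) :=
  forall Q : {set D}, (forall x : D, in_Jplus x -> x \in Q) ->
    exists (A : algebra) (phi : (carrier A -> carrier A -> Prop) -> D),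
      con_iso phi /\
      forall x : D, x \in Q <-> exists a b : carrier A, phi (princ a b) = x.

(* Main.v *)
Require Import Defs.
From HB Require Import structures.
From mathcomp Require Import all_boot all_order.
Import Order.TTheory.
Local Open Scope order_scope.
From Stdlib Require Import FunctionalExtensionality.

Section Lat.
Variables (d : Order.disp_t) (D : finTBDistrLatticeType d).

Lemma jprime (j x y : D) : join_irr j -> j <= x `|` y -> j <= x \/ j <= y.
Proof.
move=> [_ Hj] Hle.
have E : j = (j `&` x) `|` (j `&` y) by rewrite -meetUr; symmetry; apply/meet_idPl.
case: (Hj _ _ E) => ->; [left|right]; by rewrite leIr.
Qed.

Lemma coatom_join (a j : D) : coatom a -> ~~ (j <= a) -> j `|` a = \top.
Proof.
move=> [Ha Hn] Hj. apply/eqP; rewrite eq_le lex1 /=.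
case: (boolP (j `|` a < \top)) => H.
  exfalso; apply: Hn; exists (j `|` a); split => //.
  rewrite lt_neqAle leUr andbT; apply/eqP => E.
  by move: Hj; rewrite E leUl.
by move: H; rewrite lt_neqAle lex1 andbT negbK => /eqP ->.
Qed.

Lemma key_lat (a b cs ct : D) :
  coatom a -> coatom b -> ~ join_irr a ->
  (in_Jplus cs \/ cs = a `&` b) -> (in_Jplus ct \/ ct = a `&` b) ->
  cs <= a -> ct <= a ->
  ct <= cs `|` (a `&` b) -> cs <= ct `|` (a `&` b) -> a `&` b <= cs `|` ct ->
  cs <= a `&` b.
Proof.
move=> Ca Cb Na Hcs Hct csa cta H1 H2 H3.
have Ntop : forall c : D, c <= a -> c <> \top.
  move=> c ca E; case: Ca => Hlt _; move: Hlt; rewrite lt_neqAle => /andP [/eqP ne _].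
  by apply: ne; apply/eqP; rewrite eq_le lex1 /= -E.
case: Hcs => [[E|E|J]|->] //; first by rewrite E le0x.
  by exfalso; apply: (Ntop _ csa E).
case: (boolP (cs <= a `&` b)) => // Hn; exfalso.
have Hjct : cs <= ct by case: (jprime _ _ _ J H2) => // ?; move: Hn => /negP.
case: Hct => [[E|E|K]|E].
- move: Hjct; rewrite E => h.
  by case: J => /negP HH _; apply: HH; rewrite eq_le h le0x.
- exact: (Ntop _ cta E).
- have Hkcs : ct <= cs.
    case: (jprime _ _ _ K H1) => // h; move: Hn => /negP HH; exfalso; apply: HH.
    exact: le_trans Hjct h.
  have Eq : cs = ct by apply/eqP; rewrite eq_le Hjct Hkcs.
  rewrite -Eq joinxx in H3.
  have nb : ~~ (cs <= b).
    apply/negP => h; move: Hn => /negP; apply; by rewrite lexI csa h.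
  have T := coatom_join _ _ Cb nb.
  apply: Na. suff -> : a = cs by [].
  rewrite -[a]meetx1 -T meetUr (meet_idPr csa) (join_idPl H3).
  by [].
- by move: Hn; rewrite -E Hjct.
Qed.
End Lat.

Set Implicit Arguments. Unset Strict Implicit.

Section Alg.
Variable A : algebra.
Notation T := (carrier A).

Lemma princ_cong (a b : T) : congruence (princ a b).
Proof.
split.
- by move=> x S [].
- by move=> x y H S HS Sab; case: (HS) => _ Hs _ _; apply: Hs; apply: H.
- by move=> x y z H1 H2 S HS Sab; case: (HS) => _ _ Ht _; apply: (Ht _ y); [apply: H1|apply: H2].
- move=> i f g H S HS Sab; case: (HS) => _ _ _ Hc; apply: Hc => k; exact: H.
Qed.

Lemma princ_ab (a b : T) : princ a b a b.
Proof. by move=> S _. Qed.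

Lemma princ_min (a b : T) S : congruence S -> S a b -> Defs.subrel (princ a b) S.
Proof. by move=> HS Sab x y H; apply: H. Qed.

Variables (R1 R2 : T -> T -> Prop).
Hypotheses (C1 : congruence R1) (C2 : congruence R2).

Inductive path : T -> T -> Prop :=
| p_refl x : path x x
| p_step x z y : (R1 x z \/ R2 x z) -> path z y -> path x y.



Lemma path_trans x y z : path x y -> path y z -> path x z.
Proof.
elim=> // x0 z0 y0 H _ IH Hz; apply: (p_step H); exact: IH.
Qed.

Lemma path_sym x y : path x y -> path y x.
Proof.
elim=> [x0|x0 z0 y0 H _ IH]; first exact: p_refl.
apply: (path_trans IH); apply: (p_step (z:=x0)); last exact: p_refl.
case: C1 => _ s1 _ _; case: C2 => _ s2 _ _.
by case: H => h; [left; apply: s1|right; apply: s2].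
Qed.

Lemma path_ctx (c : T -> T) :
  (forall x y, R1 x y -> R1 (c x) (c y)) -> (forall x y, R2 x y -> R2 (c x) (c y)) ->
  forall x y, path x y -> path (c x) (c y).
Proof.
move=> h1 h2 x y; elim=> [x0|x0 z0 y0 H _ IH]; first exact: p_refl.
apply: (p_step (z := c z0)) => //.
by case: H => h; [left; apply: h1|right; apply: h2].
Qed.

Lemma path_cong : congruence path.
Proof.
split.
- exact: p_refl.
- exact: path_sym.
- exact: path_trans.
move=> i f g H.
pose h (m : nat) := fun k : 'I_(arity i) => if (k < m)%N then g k else f k.
have step : forall m : nat, path (op (h m)) (op (h m.+1)).
  move=> m.
  case: (ltnP m (arity i)) => Hm; last first.
    have -> : h m.+1 = h m.
      apply: functional_extensionality => k; rewrite /h.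
      have k1 : (k < m)%N by apply: leq_trans (ltn_ord k) Hm.
      by rewrite k1 ltnS (ltnW k1).
    exact: p_refl.
  pose mo := Ordinal Hm.
  pose c := fun z : T => op (fun k : 'I_(arity i) => if k == mo then z else h m k).
  have E1 : op (h m) = c (f mo).
    congr op; apply: functional_extensionality => k; rewrite /h; case: eqP => [->|//]; by rewrite /= ltnn.
  have E2 : op (h m.+1) = c (g mo).
    congr op; apply: functional_extensionality => k; rewrite /h; case: eqP => [->|Hk]; first by rewrite /= ltnSn.
    rewrite ltnS leq_eqVlt.
    have -> : (k == m :> nat) = false by apply/eqP => e; apply: Hk; apply: val_inj.
    by [].
  rewrite E1 E2; apply: path_ctx; last exact: H.
  + move=> x y Rxy; case: C1 => r _ _ hc; apply: hc => k; case: eqP => // _; exact: r.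
  + move=> x y Rxy; case: C2 => r _ _ hc; apply: hc => k; case: eqP => // _; exact: r.
have all : forall m, path (op (h 0%N)) (op (h m)).
  elim=> [|m IH]; first exact: p_refl.
  exact: path_trans IH (step m).
have -> : f = h 0%N by apply: functional_extensionality => k.
have -> : g = h (arity i) by apply: functional_extensionality => k; rewrite /h ltn_ord.
exact: all.
Qed.
End Alg.

Section Bool.
Variables (d : Order.disp_t) (D : finTBDistrLatticeType d).
Definition jirrb (z : D) := (z != \bot) &&
  [forall u : D, [forall v : D, (z == u `|` v) ==> (z == u) || (z == v)]].
Lemma jirrbP (z : D) : join_irr z <-> jirrb z.
Proof.
split.
- move=> [H1 H2]; rewrite /jirrb H1 /=; apply/forallP => u; apply/forallP => v.
  apply/implyP => /eqP E; case: (H2 _ _ E) => ->; by rewrite eqxx ?orbT.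
- move=> /andP [H1 /forallP H2]; split => // u v E.
  move: (H2 u) => /forallP /(_ v) /implyP; rewrite E eqxx => /(_ isT) /orP.
  by case=> /eqP ->; [left|right].
Qed.
Definition inJb (z : D) := (z == \bot) || (z == \top) || jirrb z.
Lemma inJbP (z : D) : in_Jplus z <-> inJb z.
Proof.
split.
- rewrite /inJb; case=> [->|->|/jirrbP ->]; by rewrite ?eqxx ?orbT.
- by rewrite /inJb => /orP [/orP [/eqP ->|/eqP ->]|/jirrbP ?]; [apply: Or31|apply: Or32|apply: Or33].
Qed.
End Bool.

Section Main.
Variables (A : algebra) (d : Order.disp_t) (D : finTBDistrLatticeType d)
  (phi : (carrier A -> carrier A -> Prop) -> D).
Hypothesis Hiso : con_iso phi.
Notation T := (carrier A).

Lemma phi_le R S : congruence R -> congruence S -> phi R <= phi S -> Defs.subrel R S.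
Proof. by move=> CR CS h; apply/(proj1 Hiso _ _ CR CS). Qed.
Lemma le_phi R S : congruence R -> congruence S -> Defs.subrel R S -> phi R <= phi S.
Proof. by move=> CR CS h; apply/(proj1 Hiso _ _ CR CS). Qed.

Lemma princ_sub (p q : T) : Defs.subrel (princ p q) (princ q p).
Proof.
apply: princ_min; first exact: princ_cong.
case: (princ_cong q p) => [_ s _ _]; apply: s; exact: princ_ab.
Qed.

Lemma princ_symphi (p q : T) : phi (princ p q) = phi (princ q p).
Proof.
apply/eqP; rewrite eq_le; apply/andP; split; apply: le_phi;
  (try exact: princ_cong); exact: princ_sub.
Qed.

Lemma triangle (p q r : T) : phi (princ p r) <= phi (princ p q) `|` phi (princ q r).
Proof.
have [R [CR ER]] := proj2 Hiso (phi (princ p q) `|` phi (princ q r)).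
have h1 : Defs.subrel (princ p q) R by apply: phi_le => //; [exact: princ_cong|rewrite ER leUl].
have h2 : Defs.subrel (princ q r) R by apply: phi_le => //; [exact: princ_cong|rewrite ER leUr].
rewrite -ER; apply: le_phi => //; first exact: princ_cong.
apply: princ_min => //; case: (CR) => _ _ tr _; apply: (tr _ q).
  apply: h1; exact: princ_ab.
apply: h2; exact: princ_ab.
Qed.
End Main.

Arguments princ_cong {A} a b.
Arguments princ_ab {A} a b.
Section Key.
Variables (A : algebra) (d : Order.disp_t) (D : finTBDistrLatticeType d)
  (phi : (carrier A -> carrier A -> Prop) -> D).
Hypothesis Hiso : con_iso phi.
Notation T := (carrier A).
Variables (a b : D) (s t : T) (Ra : T -> T -> Prop).
Hypotheses (Ca : coatom a) (Cb : coatom b) (Na : ~ join_irr a)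
  (HQ : forall p q : T, in_Jplus (phi (princ p q)) \/ phi (princ p q) = a `&` b)
  (Hst : phi (princ s t) = a `&` b) (CRa : congruence Ra) (ERa : phi Ra = a).

Lemma key_alg w : Ra s w -> princ s t s w.
Proof.
move=> Hsw.
have [r1 s1 t1 _] := CRa.
have Rst : Ra s t.
  apply: (phi_le Hiso (princ_cong s t) CRa); last exact: princ_ab.
  by rewrite Hst ERa leIl.
have csa : phi (princ w s) <= a.
  rewrite -ERa; apply: (le_phi Hiso (princ_cong w s) CRa).
  by apply: princ_min => //; apply: s1.
have cta : phi (princ w t) <= a.
  rewrite -ERa; apply: (le_phi Hiso (princ_cong w t) CRa).
  by apply: princ_min => //; apply: (t1 _ s) => //; apply: s1.
have H1 := triangle Hiso w s t.
have H2 := triangle Hiso w t s.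
have H3 := triangle Hiso s w t.
rewrite Hst in H1; rewrite (princ_symphi Hiso t s) Hst in H2.
rewrite (princ_symphi Hiso s w) Hst in H3.
have K := @key_lat d D a b _ _ Ca Cb Na (HQ w s) (HQ w t) csa cta H1 H2 H3.
rewrite -Hst in K.
have := phi_le Hiso (princ_cong w s) (princ_cong s t) K (princ_ab w s).
case: (princ_cong s t) => _ ss _ _; exact: ss.
Qed.
End Key.

Theorem lemma4p2 (d : Order.disp_t) (D : finTBDistrLatticeType d) :
  fully_A1_representable D ->
  forall x y : D, coatom x -> ~ join_irr x -> coatom y -> ~ join_irr y -> x = y.
Proof.
move=> HD a b Ca Na Cb Nb.
case: (eqVneq a b) => // Hab; exfalso.
pose Q := [set z : D | inJb z || (z == a `&` b)].
have HQin : forall z : D, in_Jplus z -> z \in Q.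
  by move=> z /inJbP h; rewrite inE h.
have [A [phi [Hiso HQ]]] := HD Q HQin.
have HQ' : forall p q, in_Jplus (phi (princ p q)) \/ phi (princ p q) = a `&` b.
  move=> p q; have : phi (princ p q) \in Q by apply/HQ; exists p, q.
  rewrite inE => /orP [/inJbP h|/eqP h]; by [left|right].
have [s [t Hst]] : exists s t, phi (princ s t) = a `&` b.
  by apply/HQ; rewrite inE eqxx orbT.
have [Ra [CRa ERa]] := proj2 Hiso a.
have [Rb [CRb ERb]] := proj2 Hiso b.
have Ka := key_alg Hiso Ca Cb Na HQ' Hst CRa ERa.
have Kb : forall w, Rb s w -> princ s t s w.
  apply: (key_alg Hiso Cb Ca Nb) => //; first by move=> p q; rewrite meetC; exact: HQ'.
  by rewrite meetC.
have Eab : a `|` b = \top.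
  rewrite joinC; apply: coatom_join => //; apply/negP => ba.
  case: Cb => _; apply; exists a; split => //; last by case: Ca.
  by rewrite lt_neqAle ba andbT eq_sym.
pose F := fun _ _ : carrier A => True.
have CF : congruence F by split.
have CP := path_cong CRa CRb.
have PF : Defs.subrel F (path Ra Rb).
  apply: (phi_le Hiso CF CP); apply: le_trans (lex1 _) _.
  rewrite -Eab leUx; apply/andP; split.
    rewrite -ERa; apply: (le_phi Hiso CRa CP) => u v h.
    by apply: (p_step (z:=v)); [left|apply: p_refl].
  rewrite -ERb; apply: (le_phi Hiso CRb CP) => u v h.
  by apply: (p_step (z:=v)); [right|apply: p_refl].
have Pst : forall u v, path Ra Rb u v -> princ s t s u -> princ s t s v.
  have [_ ss st _] := princ_cong s t.
  move=> u v; elim=> // u0 z0 y0 H _ IH Hu; apply: IH.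
  have Ma : Defs.subrel (princ s t) Ra.
    by apply: (phi_le Hiso (princ_cong s t) CRa); rewrite Hst ERa leIl.
  have Mb : Defs.subrel (princ s t) Rb.
    by apply: (phi_le Hiso (princ_cong s t) CRb); rewrite Hst ERb leIr.
  case: H => h.
  - apply: Ka; case: CRa => _ _ tr _; apply: (tr _ u0) => //; exact: Ma.
  - apply: Kb; case: CRb => _ _ tr _; apply: (tr _ u0) => //; exact: Mb.
have All : forall u, princ s t s u.
  move=> u; apply: (Pst s u); first exact: PF.
  have [r _ _ _] := princ_cong s t; exact: r.
have MF : Defs.subrel F (princ s t).
  move=> u v _; have [_ ss tr _] := princ_cong s t.
  apply: (tr _ s); [apply: ss|]; exact: All.
have := le_phi Hiso CF (princ_cong s t) MF.
rewrite Hst => h.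
case: Ca => Hlt _; move: Hlt; rewrite lt_neqAle => /andP [/negP ne _]; apply: ne.
rewrite eq_le lex1 /=.
have [Rt [CRt ERt]] := proj2 Hiso \top.
have : phi Rt <= phi F by apply: (le_phi Hiso CRt CF).
rewrite ERt => h2.
apply: le_trans h2 (le_trans h _); exact: leIl.
Qed.
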